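(* For each integer $k\ge 3$ and each integer $t\ge0$: $m_2^{(1)}(k-1,3t+2)=t v_k+2^{k-1}$, $m_2^{(1)}(k-1,3t+3)=(t+1)v_k$, and $m_2^{(1)}(k-1,3t+4)=(t+1)v_k+1$, where $v_k=2^k-1$.
   Context: For a prime power $q$ and $N\ge1$, a multiset of points in $\mathrm{PG}(N,q)$ is a map $\mathcal{K}$ from the points to $\mathbb{Z}_{\ge0}$, with $\mathcal{K}(S)=\sum_{P\in S}\mathcal{K}(P)$; its cardinality is $\mathcal{K}(\mathrm{PG}(N,q))$. Dimensions are projective (lines have dimension 1). For $0\le r\le N-1$ and a positive integer $w$, $m_q^{(r)}(N,w)$ is the maximum cardinality of a multiset of points in $\mathrm{PG}(N,q)$ such that every $r$-dimensional subspace has multiplicity at most $w$. *)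

(* Defs.v *)
From mathcomp Require Import all_boot all_order all_algebra.
Set Implicit Arguments. Unset Strict Implicit. Unset Printing Implicit Defensive.
Import GRing.Theory.

(* Since the only nonzero scalar of GF(2) is 1, the points of PG(N,2) are in
   bijection with the nonzero vectors of 'rV['F_2]_(N.+1).
   A projective r-dimensional subspace is the set of nonzero vectors of an
   (r+1)-dimensional vector subspace, represented as the row space of a
   matrix U : 'M_(r.+1, N.+1) of rank r.+1. *)

Definition vec2 (N : nat) := 'rV['F_2]_(N.+1).

(* A multiset of points: a map from vectors to nat; only its values on
   nonzero vectors (= points) are ever used. *)
Definition mset2 (N : nat) := {ffun vec2 N -> nat}.

Definition msubmult (N r : nat) (K : mset2 N) (U : 'M['F_2]_(r.+1, N.+1)) : nat :=
  (\sum_(v : vec2 N | (v != 0%R) && (v <= U)%MS) K v)%N.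

Definition mcard (N : nat) (K : mset2 N) : nat :=
  (\sum_(v : vec2 N | v != 0%R) K v)%N.

Definition admissible (r N w : nat) (K : mset2 N) : Prop :=
  forall U : 'M['F_2]_(r.+1, N.+1), \rank U = r.+1 -> (msubmult K U <= w)%N.

(* n = m_2^{(r)}(N, w): n is the maximum cardinality of an admissible multiset *)
Definition is_m2 (r N w n : nat) : Prop :=
  (exists K : mset2 N, admissible r w K /\ mcard K = n) /\
  (forall K : mset2 N, admissible r w K -> (mcard K <= n)%N).

(* Main.v *)
Require Import Defs.
From mathcomp Require Import all_boot all_order all_algebra zify.
Import GRing.Theory.
Set Implicit Arguments. Unset Strict Implicit.
Local Open Scope ring_scope.

Lemma F2_cases (x : 'F_2) : x = 0 \/ x = 1.
Proof. case: x => [[|[|m]] Hm]; [left|right|]; try by apply/val_inj. done. Qed.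

Lemma F2_add_self n (x : 'rV['F_2]_n) : x + x = 0.
Proof.
apply/matrixP=> i j; rewrite !mxE; case: (F2_cases (x i j)) => ->; [by rewrite addr0 | by apply/val_inj].
Qed.

Lemma rowspace2 n (p q x : 'rV['F_2]_n) :
  (x <= col_mx p q)%MS = [|| x == 0, x == p, x == q | x == p + q].
Proof.
rewrite -addsmxE; apply/sub_addsmxP/idP.
  case=> [[a b]] /= ->; rewrite (mx11_scalar a) (mx11_scalar b) !mul_scalar_mx.
  by case: (F2_cases (a 0 0)) => ->; case: (F2_cases (b 0 0)) => ->;
     rewrite ?scale0r ?scale1r ?add0r ?addr0 eqxx ?orbT.
case/or4P=> /eqP ->.
- by exists (0, 0); rewrite !mul0mx addr0.
- by exists (1%:M, 0); rewrite mul1mx mul0mx addr0.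
- by exists (0, 1%:M); rewrite mul1mx mul0mx add0r.
- by exists (1%:M, 1%:M); rewrite !mul1mx.
Qed.

Lemma rowspace1 n (p x : 'rV['F_2]_n) : (x <= p)%MS = (x == 0) || (x == p).
Proof.
apply/submxP/idP.
  case=> a ->; rewrite (mx11_scalar a) mul_scalar_mx.
  by case: (F2_cases (a 0 0)) => ->; rewrite ?scale0r ?scale1r eqxx ?orbT.
case/orP=> /eqP ->.
- by exists 0; rewrite mul0mx.
- by exists 1%:M; rewrite mul1mx.
Qed.

Lemma rank2 n (p q : 'rV['F_2]_n) :
  (\rank (col_mx p q) == 2)%N = [&& p != 0, q != 0 & p != q].
Proof.
have rp : forall r : 'rV['F_2]_n, r != 0 -> \rank r = 1%N.
  move=> r r0; apply/eqP; rewrite eqn_leq rank_leq_row lt0n mxrank_eq0 r0 //.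
have le1 : forall r : 'rV['F_2]_n, (col_mx p q <= r)%MS -> (\rank (col_mx p q) <= 1)%N.
  by move=> r /mxrankS H; apply: leq_trans H (rank_leq_row _).
have pS : (p <= col_mx p q)%MS by rewrite rowspace2 eqxx orbT.
have qS : (q <= col_mx p q)%MS by rewrite rowspace2 eqxx !orbT.
apply/idP/idP.
  move=> /eqP r2; apply/and3P; split; apply/negP => /eqP E.
  - have H : (col_mx p q <= q)%MS by rewrite -addsmxE addsmx_sub E sub0mx submx_refl.
    by have := le1 _ H; rewrite r2.
  - have H : (col_mx p q <= p)%MS by rewrite -addsmxE addsmx_sub E sub0mx submx_refl.
    by have := le1 _ H; rewrite r2.
  - have H : (col_mx p q <= q)%MS by rewrite -addsmxE addsmx_sub E submx_refl.
    by have := le1 _ H; rewrite r2.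
case/and3P=> p0 q0 pq.
have r1 := rp p p0.
have := mxrank_leqif_sup pS; rewrite r1 => /leqifP.
case: ifP => [/(submx_trans qS)|_].
  by rewrite rowspace1 (negbTE q0) eq_sym (negbTE pq).
have := rank_leq_row (col_mx p q); lia.
Qed.

Lemma oppF n (x : 'rV['F_2]_n) : - x = x.
Proof. by rewrite -[LHS]addr0 -(F2_add_self x) addKr. Qed.

Lemma addF_eq0 n (p q : 'rV['F_2]_n) : (p + q == 0) = (p == q).
Proof. by rewrite addr_eq0 oppF. Qed.

Lemma addF_eql n (p q : 'rV['F_2]_n) : (p + q == p) = (q == 0).
Proof. by rewrite -{2}[p]addr0 (inj_eq (addrI p)). Qed.

Lemma addF_eqr n (p q : 'rV['F_2]_n) : (p + q == q) = (p == 0).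
Proof. by rewrite addrC addF_eql. Qed.

Lemma msub_line N (K : mset2 N) (p q : vec2 N) : p != 0 -> q != 0 -> p != q ->
  msubmult K (col_mx p q) = (K p + K q + K (p + q)%R)%N.
Proof.
move=> p0 q0 pq.
rewrite /msubmult (eq_bigl (fun v : vec2 N => (v == p) || (v == q) || (v == p + q))); last first.
  move=> v /=; rewrite rowspace2; case: (v =P 0) => [->|_] //=.
  by rewrite !(eq_sym 0) (negbTE p0) (negbTE q0) addF_eq0 (negbTE pq).
  by rewrite orbA.
rewrite (bigD1 p) ?eqxx //= (bigD1 q) ?eqxx ?orbT //= 1?eq_sym //.
rewrite (bigD1 (p + q)%R) /=; last by rewrite eqxx orbT eq_sym addF_eqr p0 eq_sym addF_eql q0.
rewrite big_pred0 ?addn0 ?addnA // => v.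
by case: (v =P p); case: (v =P q); case: (v =P (p + q)%R).
Qed.

Lemma rank2_split N (U : 'M['F_2]_(2, N.+1)) : \rank U = 2%N ->
  exists p q : vec2 N, [/\ U = col_mx p q, p != 0, q != 0 & p != q].
Proof.
move=> r2; have E := vsubmxK (U : 'M_(1 + 1, N.+1)).
exists (usubmx (U : 'M_(1 + 1, N.+1))), (dsubmx (U : 'M_(1 + 1, N.+1))).
have : (\rank (col_mx (usubmx (U : 'M_(1 + 1, N.+1))) (dsubmx (U : 'M_(1 + 1, N.+1)))) == 2)%N.
  by rewrite E r2.
by rewrite rank2 => /and3P[a b c]; split.
Qed.

Lemma adm_lines N (K : mset2 N) w :
  (forall p q : vec2 N, p != 0 -> q != 0 -> p != q -> (K p + K q + K (p + q)%R <= w)%N) ->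
  admissible 1 w K.
Proof.
move=> H U /rank2_split [p [q [-> p0 q0 pq]]].
by rewrite msub_line //; apply: H.
Qed.

Lemma line_adm N (K : mset2 N) w (p q : vec2 N) : admissible 1 w K ->
  p != 0 -> q != 0 -> p != q -> (K p + K q + K (p + q)%R <= w)%N.
Proof.
move=> A p0 q0 pq; rewrite -msub_line //; apply: A.
by apply/eqP; rewrite rank2 p0 q0 pq.
Qed.

Lemma card_vec N : #|{: vec2 N}| = (2 ^ N.+1)%N.
Proof. by rewrite card_mx card_Fp // mul1n. Qed.

Lemma sum_nz_const N c : (\sum_(x : vec2 N | x != 0%R) c = (2 ^ N.+1 - 1) * c)%N.
Proof.
transitivity (\sum_(x in predC1 (0%R : vec2 N)) c)%N; first by apply: eq_bigl.
by rewrite sum_nat_const cardC1 card_vec subn1.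
Qed.

Lemma key N (K : mset2 N) w (P : vec2 N) : admissible 1 w K -> P != 0 ->
  exists R, mcard K = (K P + R)%N /\ ((2 ^ N - 1) * K P + R <= (2 ^ N - 1) * w)%N.
Proof.
move=> A P0.
pose Z := [pred Q : vec2 N | (Q != 0) && (Q != P)].
exists (\sum_(Q in Z) K Q)%N; split.
  by rewrite /mcard (bigD1 P) //; congr (_ + _)%N; apply: eq_bigl.
have cZ : #|Z| = (2 * (2 ^ N - 1))%N.
  have := cardD1 P (predC1 (0 : vec2 N)); rewrite cardC1 card_vec inE P0.
  have -> : #|[predD1 predC1 (0 : vec2 N) & P]| = #|Z|.
    by apply: eq_card => Q; rewrite !inE andbC.
  have := expn_gt0 2 N; rewrite expnS /=; lia.
have re : (\sum_(Q in Z) K (P + Q)%R = \sum_(Q in Z) K Q)%N.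
  rewrite [RHS](reindex_inj (addrI P)); apply: eq_bigl => Q.
  by rewrite !inE /= addF_eq0 addF_eql andbC [P == Q]eq_sym.
have H : (\sum_(Q in Z) (K P + K Q + K (P + Q)%R) <= \sum_(Q in Z) w)%N.
  apply: leq_sum => Q; rewrite inE => /andP[Q0 QP].
  by apply: line_adm => //; rewrite eq_sym.
move: H; rewrite !big_split /= re !sum_nat_const cZ.
set c := (2 ^ N - 1)%N; set R := (\sum_(Q in Z) K Q)%N.
rewrite -!mulnA; lia.
Qed.

Lemma upper_all N (K : mset2 N) c : (forall P : vec2 N, P != 0%R -> K P <= c)%N ->
  (mcard K <= (2 ^ N.+1 - 1) * c)%N.
Proof. by move=> H; rewrite -sum_nz_const; apply: leq_sum. Qed.

Lemma F2_10 : (1 + 1 : 'F_2) = 0. Proof. by apply/val_inj. Qed.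
Lemma F2_01 : ((0 : 'F_2) == 1) = false. Proof. by rewrite eq_sym oner_eq0. Qed.

Lemma card_aff N : #|[pred x : vec2 N | x ord0 ord0 == 1%R]| = (2 ^ N)%N.
Proof.
set A := [pred x : vec2 N | x ord0 ord0 == 1%R].
have eA : #|A| = #|[predC A]|.
  pose e : vec2 N := const_mx 1.
  rewrite -!sum1_card (reindex_inj (addIr e)); apply: eq_bigl => x.
  rewrite !inE /= !mxE.
  by case: (F2_cases (x ord0 ord0)) => ->; rewrite ?add0r ?F2_10 ?eqxx ?F2_01.
have := cardC A; rewrite card_vec expnS. move=> H; have : (2 * #|A| = 2 * 2 ^ N)%N by rewrite -H mul2n -addnn {2}eA.
by move/eqP; rewrite eqn_pmul2l // => /eqP.
Qed.

Lemma sum_aff N : (\sum_(x : vec2 N | x != 0%R) (x ord0 ord0 == 1%R : nat) = 2 ^ N)%N.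
Proof.
rewrite -card_aff -sum1_card [RHS]big_mkcond /= [RHS](bigD1 0%R) //=.
rewrite inE mxE F2_01 add0n.
apply: eq_bigr => x _; rewrite !inE.
by case: (x ord0 ord0 == 1%R).
Qed.

Lemma upper_gen N (K : mset2 N) w s b : admissible 1 w K ->
  (forall m R, (b < m)%N -> ((2 ^ N - 1) * m + R <= (2 ^ N - 1) * w)%N -> (m + R <= s)%N) ->
  ((2 ^ N.+1 - 1) * b <= s)%N -> (mcard K <= s)%N.
Proof.
move=> A H1 H2.
case: (boolP [exists P : vec2 N, (P != 0%R) && (b < K P)%N]).
  case/existsP => P /andP[P0 bP]; have [R [-> H]] := key A P0.
  exact: H1.
move/existsPn => H; apply: leq_trans (upper_all (c:=b) _) H2.
by move=> P P0; have := H P; rewrite P0 /= -leqNgt.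
Qed.

Lemma m2_A N t : (2 <= N)%N -> is_m2 1 N (3 * t + 2) (t * (2 ^ N.+1 - 1) + 2 ^ N).
Proof.
move=> N2; have a4 : (4 <= 2 ^ N)%N by exact: (@leq_pexp2l 2 2 N isT N2).
split.
- exists [ffun x : vec2 N => (t + (x ord0 ord0 == 1%R))%N]; split.
  + apply: adm_lines => p q p0 q0 pq; rewrite !ffunE !mxE.
    case: (F2_cases (p ord0 ord0)) => ->; case: (F2_cases (q ord0 ord0)) => ->;
      rewrite ?addr0 ?add0r ?F2_10 ?F2_01 ?eqxx /=; lia.
  + rewrite /mcard; under eq_bigr do rewrite ffunE.
    by rewrite big_split /= sum_nz_const sum_aff mulnC.
- move=> K A; apply: (upper_gen (b := t) A).
    move=> m R tm; rewrite expnS.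
    move=> H; nia.
  by rewrite mulnC leq_addr.
Qed.

Lemma m2_B N t : (2 <= N)%N -> is_m2 1 N (3 * t + 3) (t.+1 * (2 ^ N.+1 - 1)).
Proof.
move=> N2; have a4 : (4 <= 2 ^ N)%N by exact: (@leq_pexp2l 2 2 N isT N2).
split.
- exists [ffun x : vec2 N => t.+1]; split.
  + by apply: adm_lines => p q p0 q0 pq; rewrite !ffunE; lia.
  + rewrite /mcard; under eq_bigr do rewrite ffunE.
    by rewrite sum_nz_const mulnC.
- move=> K A; apply: (upper_gen (b := t.+1) A).
    move=> m R tm; rewrite expnS.
    move=> H; nia.
  by rewrite mulnC.
Qed.

Lemma e_nz N : (const_mx 1 : vec2 N) != 0.
Proof.
apply/eqP => /matrixP/(_ ord0 ord0); rewrite !mxE => /eqP.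
by rewrite oner_eq0.
Qed.

Lemma m2_C N t : (2 <= N)%N -> is_m2 1 N (3 * t + 4) (t.+1 * (2 ^ N.+1 - 1) + 1).
Proof.
move=> N2; have a4 : (4 <= 2 ^ N)%N by exact: (@leq_pexp2l 2 2 N isT N2).
set e : vec2 N := const_mx 1.
split.
- exists [ffun x : vec2 N => (t.+1 + (x == e))%N]; split.
  + apply: adm_lines => p q p0 q0 pq; rewrite !ffunE.
    suff : ((p == e) + (q == e) + ((p + q)%R == e) <= 1)%N.
      by case: (p == e); case: (q == e); case: ((p + q)%R == e) => /=; lia.
    case: (p =P e) => [E1|_]; case: (q =P e) => [E2|_]; case: ((p + q)%R =P e) => [E3|_] //=.
    * by move: pq; rewrite E1 E2 eqxx.
    * by move: pq; rewrite E1 E2 eqxx.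
    * by move: E3; rewrite E1 => /eqP; rewrite addF_eql (negbTE q0).
    * by move: E3; rewrite E2 => /eqP; rewrite addF_eqr (negbTE p0).
  + rewrite /mcard; under eq_bigr do rewrite ffunE.
    rewrite big_split /= sum_nz_const (bigD1 e) ?e_nz //= eqxx big1 ?addn0.
      by rewrite mulnC.
    by move=> x /andP[_ /negbTE ->].
- move=> K A; apply: (upper_gen (b := t.+1) A).
    move=> m R tm; rewrite expnS.
    move=> H; nia.
  by rewrite mulnC leq_addr.
Qed.

Theorem mainTheorem4 (k t : nat) : (3 <= k)%N ->
  let v := (2 ^ k - 1)%N in
  [/\ is_m2 1 (k - 1) (3 * t + 2) (t * v + 2 ^ (k - 1))%N,
      is_m2 1 (k - 1) (3 * t + 3) (t.+1 * v)%N
    & is_m2 1 (k - 1) (3 * t + 4) (t.+1 * v + 1)%N].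
Proof.
case: k => [|N] // hk v; rewrite /v subn1 /=.
have N2 : (2 <= N)%N by [].
by split; [apply: m2_A | apply: m2_B | apply: m2_C].
Qed.
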